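(* Let $\Sigma=(\tilde{\mathbf x},\tilde B(Q))$ be a $(G,\psi)$-admissible seed, and let $K$ be a mutable $G$-orbit. If the quiver $\mu_K(Q)$ is $G$-admissible, then the seed $\mu_K(\Sigma)$ is $(G,\psi)$-admissible, and $(\mu_K(\Sigma))^G=\mu_K(\Sigma^G)$.
   Context: $Q$ is a quiver with vertices $1,\dots,m$, mutable $1,\dots,n$, frozen $n+1,\dots,m$; $\tilde B(Q)=(b_{ij})$ is the $m\times n$ matrix with $b_{ij}$ = #arrows $i\to j$ minus #arrows $j\to i$. A seed $(\tilde{\mathbf x},\tilde B)$ in a field $\mathcal F$ consists of a free generating tuple $\tilde{\mathbf x}=(x_1,\dots,x_m)$ of $\mathcal F$ and such a matrix; mutation at mutable $k$ replaces $\tilde B$ by its matrix mutation ($b'_{ij}=-b_{ij}$ if $k\in\{i,j\}$, else $b_{ij}+\mathrm{sgn}(b_{ik})\max(b_{ik}b_{kj},0)$) and $x_k$ by $x_k'=(\prod_{b_{ik}>0}x_i^{b_{ik}}+\prod_{b_{ik}<0}x_i^{-b_{ik}})/x_k$ (products over $i\le m$). A group $G$ acts on $\{1,\dots,m\}$ mapping $\{1,\dots,n\}$ to itself; $i\sim i'$ means same orbit; $m^G$ is the number of orbits. $Q$ is $G$-admissible if: (1) $i\sim i'$ implies $i$ mutable iff $i'$ mutable; (2) $b_{ij}=b_{g(i),g(j)}$; (3) $b_{ii'}=0$ for mutable $i\sim i'$; (4) $b_{ij}b_{i'j}\ge0$ for $i\sim i'$, $j$ mutable. Then $\tilde B^G=(b^G_{IJ})$,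 rows indexed by orbits and columns by mutable orbits, $b^G_{IJ}=\sum_{i\in I}b_{ij}$ ($j\in J$ arbitrary). $\mathcal F$ (resp. $\mathcal F^G$) is a field of rational functions in $m$ (resp. $m^G$) variables, $\mathcal F_{\mathrm{sf}}$, $\mathcal F^G_{\mathrm{sf}}$ the semifields of subtraction-free rational expressions, and $\psi:\mathcal F_{\mathrm{sf}}\to\mathcal F^G_{\mathrm{sf}}$ a surjective semifield homomorphism. A seed $\Sigma=(\tilde{\mathbf x},\tilde B(Q))$ in $\mathcal F$ is $(G,\psi)$-admissible if $Q$ is $G$-admissible and $\psi(x_i)=\psi(x_{i'})$ whenever $i\sim i'$; its folded seed is $\Sigma^G=(\tilde{\mathbf x}^G,\tilde B^G)$ in $\mathcal F^G$ with $\tilde{\mathbf x}^G=(x_I)$, $x_I=\psi(x_i)$ for $i\in I$. For a mutable orbit $K$, $\mu_K$ on $\Sigma$ denotes the composition of the (commuting) mutations at all $k\in K$, and on $\Sigma^G$ the single mutation at the index $K$. *)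

(* Defs.v *)
From HB Require Import structures.
From mathcomp Require Import all_boot all_order all_algebra all_fingroup.
From mathcomp Require Import fraction.
From mathcomp Require Import mpoly.
Set Implicit Arguments.
Unset Strict Implicit.
Unset Printing Implicit Defensive.
Import Order.TTheory GRing.Theory Num.Theory.
Local Open Scope ring_scope.

Definition RF (V : finType) : fieldType := {fraction {mpoly rat[#|V|]}}.

Definition rfvar (V : finType) (v : V) : RF V :=
  FracField.tofrac ('X_(enum_rank v) : {mpoly rat[#|V|]}).

Inductive sf (V : finType) : RF V -> Prop :=
| sf_var (v : V) : sf (rfvar v)
| sf_add (a b : RF V) : sf a -> sf b -> sf (a + b)
| sf_mul (a b : RF V) : sf a -> sf b -> sf (a * b)
| sf_div (a b : RF V) : sf a -> sf b -> sf (a / b).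

Definition sf_hom (V W : finType) (psi : RF V -> RF W) : Prop :=
  (forall a, sf a -> sf (psi a)) /\
  (forall a b, sf a -> sf b ->
     [/\ psi (a + b) = psi a + psi b,
         psi (a * b) = psi a * psi b &
         psi (a / b) = psi a / psi b]).

Definition sf_surj (V W : finType) (psi : RF V -> RF W) : Prop :=
  forall c, sf c -> exists2 a, sf a & psi a = c.

Definition rfeval (V : finType) (x : V -> RF V) (p : {mpoly rat[#|V|]}) : RF V :=
  mmap ratr (fun i => x (enum_val i)) p.

(* x is a free generating tuple of the field RF V (over Q). *)
Definition free_gen (V : finType) (x : V -> RF V) : Prop :=
  (forall p, rfeval x p = 0 -> p = 0) /\
  (forall f : RF V, exists p q, rfeval x q != 0 /\ f = rfeval x p / rfeval x q).

(* An (extended) exchange matrix on the vertex set V with mutable vertices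
   [mut]: B i j is the entry b_ij.  Only the columns j with [mut j] are
   meaningful; by convention the frozen columns are 0. *)
Definition exmx (V : finType) := V -> V -> int.

(* B = B~(Q) for a quiver Q (no loops, no 2-cycles, no arrows between frozen
   vertices): frozen columns are 0 and the principal part is skew-symmetric. *)
Definition quiver_mx (V : finType) (mut : pred V) (B : exmx V) : Prop :=
  (forall i j, ~~ mut j -> B i j = 0) /\
  (forall i j, mut i -> mut j -> B i j = - B j i).

Definition mx_mut (V : finType) (mut : pred V) (B : exmx V) (k : V) : exmx V :=
  fun i j =>
    if ~~ mut j then 0
    else if (i == k) || (j == k) then - B i j
    else B i j + sgz (B i k) * Num.max (B i k * B k j) 0.

Definition x_mut (V : finType) (L : fieldType) (B : exmx V) (x : V -> L) (k : V)
  : V -> L :=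
  fun i =>
    if i == k then
      ((\prod_(j | 0 < B j k) x j ^+ `|B j k|%N) +
       (\prod_(j | B j k < 0) x j ^+ `|B j k|%N)) / x k
    else x i.

Definition seed (V : finType) (L : Type) := ((V -> L) * exmx V)%type.

Definition seed_mut (V : finType) (L : fieldType) (mut : pred V)
  (s : seed V L) (k : V) : seed V L :=
  (x_mut s.2 s.1 k, mx_mut mut s.2 k).

Section Folding.
Variable V : finType.
Variable G : {group {perm V}}.

Definition orbeq (i i' : V) : bool := i' \in orbit 'P G i.

Definition orbits : {set {set V}} := [set orbit 'P G i | i : V].

Definition Gorb : finType := {I : {set V} | I \in orbits}.

Definition omut (mut : pred V) : pred Gorb := fun I => [exists j in val I, mut j].

Definition G_admissible (mut : pred V) (B : exmx V) : Prop :=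
  [/\ (forall i i', orbeq i i' -> mut i = mut i'),
      (forall g i j, g \in G -> mut j -> B i j = B (g i) (g j)),
      (forall i i', mut i -> orbeq i i' -> B i i' = 0)
    & (forall i i' j, orbeq i i' -> mut j -> 0 <= B i j * B i' j)].

Definition psi_admissible (mut : pred V) (psi : RF V -> RF Gorb)
  (s : seed V (RF V)) : Prop :=
  [/\ G_admissible mut s.2,
      (forall i, sf (s.1 i))
    & (forall i i', orbeq i i' -> psi (s.1 i) = psi (s.1 i'))].

Definition fold_x (psi : RF V -> RF Gorb) (x : V -> RF V) : Gorb -> RF Gorb :=
  fun I => if [pick i in val I] is Some i then psi (x i) else 0.

Definition fold_B (mut : pred V) (B : exmx V) : exmx Gorb :=
  fun I J =>
    if ~~ omut mut J then 0
    else if [pick j in val J] is Some j then \sum_(i in val I) B i j else 0.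

Definition fold_seed (mut : pred V) (psi : RF V -> RF Gorb) (s : seed V (RF V))
  : seed Gorb (RF Gorb) :=
  (fold_x psi s.1, fold_B mut s.2).

Definition orbit_mut (mut : pred V) (K : Gorb) (s : seed V (RF V)) : seed V (RF V) :=
  foldr (fun k s' => seed_mut mut s' k) s (enum (val K)).

Definition orbit_mx_mut (mut : pred V) (K : Gorb) (B : exmx V) : exmx V :=
  foldr (fun k B' => mx_mut mut B' k) B (enum (val K)).

End Folding.

(* mutable vertices of 'I_m are 1..n, i.e. indices < n *)
Definition mutI (m n : nat) : pred 'I_m := fun i => (i < n)%N.

Arguments orbeq [V] G i i'.
Arguments orbits [V] G.
Arguments G_admissible [V] G mut B.
Arguments psi_admissible [V] G mut psi s.
Arguments mutI m n i : clear implicits.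

(* Main.v *)
Require Import Defs.
From HB Require Import structures.
From mathcomp Require Import all_boot all_order all_algebra all_fingroup.
From mathcomp Require Import fraction.
From mathcomp Require Import mpoly.
From mathcomp Require Import zify.
From Stdlib Require Import FunctionalExtensionality.
Set Implicit Arguments. Unset Strict Implicit. Unset Printing Implicit Defensive.
Import Order.TTheory GRing.Theory Num.Theory.
Local Open Scope ring_scope.

Section Orb.
Variables (V : finType) (G : {group {perm V}}).

Lemma GorbP (I : Gorb G) : exists i0, val I = orbit 'P G i0.
Proof. by case: I => /= I /imsetP [i0 _ ->]; exists i0. Qed.

Lemma orb_mem_eq (I : Gorb G) i : i \in val I -> val I = orbit 'P G i.
Proof. by case: (GorbP I) => i0 -> /orbit_eqP ->. Qed.

Lemma orb_eq (I : Gorb G) i i' : i \in val I -> i' \in val I -> orbeq G i i'.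
Proof. by move=> Hi; rewrite /orbeq -(orb_mem_eq Hi). Qed.

Lemma orb_closed (I : Gorb G) i i' : i \in val I -> orbeq G i i' -> i' \in val I.
Proof. by move=> Hi; rewrite /orbeq (orb_mem_eq Hi). Qed.

Lemma orb_act (I : Gorb G) i g : g \in G -> (g i \in val I) = (i \in val I).
Proof.
move=> gG; case: (GorbP I) => i0 ->; apply: orbit_transl.
by apply/orbitP; exists g.
Qed.

Lemma orb_uniq (I J : Gorb G) i : i \in val I -> i \in val J -> I = J.
Proof. by move=> Hi Hj; apply: val_inj; rewrite (orb_mem_eq Hi) (orb_mem_eq Hj). Qed.

Definition orb_of (i : V) : Gorb G.
Proof. exists (orbit 'P G i); exact: imset_f. Defined.

Lemma orb_of_mem i : i \in val (orb_of i).
Proof. exact: orbit_refl. Qed.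

Lemma orb_ofE i (J : Gorb G) : (orb_of i == J) = (i \in val J).
Proof.
apply/eqP/idP => [<-|iJ]; first exact: orb_of_mem.
exact: orb_uniq (orb_of_mem i) iJ.
Qed.

Lemma orb_nonempty (I : Gorb G) : exists i, i \in val I.
Proof. by case: (GorbP I) => i0 ->; exists i0; apply: orbit_refl. Qed.

Lemma orb_g (I : Gorb G) k0 k : k0 \in val I -> k \in val I ->
  exists2 g, g \in G & k = g k0.
Proof.
move=> H0 H; have := orb_eq H0 H; rewrite /orbeq => /orbitP [g gG <-].
by exists g.
Qed.

End Orb.

Lemma f_split (a b : int) : sgz a * Num.max (a * b) 0 =
  Num.max a 0 * Num.max b 0 - Num.min a 0 * Num.min b 0.
Proof.
case: (ltrgt0P a) => h; first by rewrite gtr0_sgz //; nia.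
  by rewrite ltr0_sgz //; nia.
by rewrite h sgz0; nia.
Qed.

Lemma ss_maxmin (T : finType) (A : {set T}) (a : T -> int) :
  (forall i i', i \in A -> i' \in A -> 0 <= a i * a i') ->
  \sum_(i in A) Num.max (a i) 0 = Num.max (\sum_(i in A) a i) 0 /\
  \sum_(i in A) Num.min (a i) 0 = Num.min (\sum_(i in A) a i) 0.
Proof.
move=> H; case: (boolP [exists i in A, 0 < a i]).
  case/existsP => i0 /andP [i0A pos].
  have nn : forall i, i \in A -> 0 <= a i.
    by move=> i iA; have := H i0 i i0A iA; rewrite pmulr_rge0.
  have S0 : 0 <= \sum_(i in A) a i by apply: sumr_ge0.
  split.
    rewrite max_l //; apply: eq_bigr => i iA; rewrite max_l //; exact: nn.
  rewrite min_r // big1 // => i iA; rewrite min_r //; exact: nn.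
rewrite negb_exists => /forallP H'.
have np : forall i, i \in A -> a i <= 0.
  by move=> i iA; have := H' i; rewrite iA /= -leNgt.
have S0 : \sum_(i in A) a i <= 0 by apply: sumr_le0.
split.
  rewrite max_r // big1 // => i iA; rewrite max_r //; exact: np.
rewrite min_l //; apply: eq_bigr => i iA; rewrite min_l //; exact: np.
Qed.

Lemma ss_P (T : finType) (A : {set T}) (a : T -> int) :
  (forall i i', i \in A -> i' \in A -> 0 <= a i * a i') ->
  (0 < \sum_(i in A) a i) = [exists i in A, 0 < a i] /\
  (0 < \sum_(i in A) a i ->
     absz (\sum_(i in A) a i) = \sum_(i in A | 0 < a i) absz (a i)).
Proof.
move=> H; case: (boolP [exists i in A, 0 < a i]).
  case/existsP => i0 /andP [i0A pos].
  have nn : forall i, i \in A -> 0 <= a i.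
    by move=> i iA; have := H i0 i i0A iA; rewrite pmulr_rge0.
  have S0 : 0 < \sum_(i in A) a i.
    rewrite (bigD1 i0) //=; apply: (lt_le_trans pos); rewrite lerDl.
    by apply: sumr_ge0 => i /andP [iA _]; apply: nn.
  split => // _.
  suff : Posz (absz (\sum_(i in A) a i)) = Posz (\sum_(i in A | 0 < a i) absz (a i))
    by case.
  rewrite abszE gtr0_norm // (big_morph Posz PoszD (erefl (Posz 0%N))).
  rewrite [RHS](eq_bigr (fun i => a i)); last first.
    by move=> i /andP [_ h]; rewrite abszE gtr0_norm.
  rewrite [RHS]big_mkcondr /=; apply: eq_bigr => i iA.
  case: ifP => // h; apply/eqP; rewrite eq_le nn // andbT leNgt h //.
rewrite negb_exists => /forallP H'.
have np : forall i, i \in A -> a i <= 0.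
  by move=> i iA; have := H' i; rewrite iA /= -leNgt.
have S0 : \sum_(i in A) a i <= 0 by apply: sumr_le0.
by rewrite ltNge S0.
Qed.

Section Main.
Variables (m n : nat) (G : {group {perm 'I_m}}).
Local Notation V := 'I_m.
Local Notation mut := (mutI m n).

Lemma mut_orb (B' : exmx V) (HA : G_admissible G mut B') (I : Gorb G) i :
  i \in val I -> omut mut I = mut i.
Proof.
case: HA => H1 _ _ _ iI; apply/existsP/idP => [[j /andP [jI mj]]|mi].
  by rewrite -(H1 j i (orb_eq jI iI)).
by exists i; rewrite iI.
Qed.

Lemma sum_inv_col (B' : exmx V) (HA : G_admissible G mut B') (I J : Gorb G) j j' :
  j \in val J -> j' \in val J -> mut j ->
  \sum_(i in val I) B' i j = \sum_(i in val I) B' i j'.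
Proof.
case: HA => H1 H2 _ _ jJ j'J mj; have [g gG ->] := orb_g j'J jJ.
rewrite [LHS](reindex_inj (@perm_inj _ g)) /=.
apply: eq_big => [i|i _]; first by rewrite orb_act.
by rewrite -H2 // -(H1 j j' (orb_eq jJ j'J)).
Qed.

Lemma sum_inv_row (B' : exmx V) (HA : G_admissible G mut B') (K : Gorb G) j j' :
  orbeq G j j' -> mut j ->
  \sum_(k in val K) B' k j = \sum_(k in val K) B' k j'.
Proof.
case: HA => H1 H2 _ _ jj' mj.
have jO := orb_of_mem G j; have j'O := orb_closed jO jj'.
have [g gG ->] := orb_g jO j'O.
rewrite [RHS](reindex_inj (@perm_inj _ g)) /=.
apply: eq_big => [i|i _]; first by rewrite orb_act.
by rewrite -H2.
Qed.

Lemma fold_B_any (B' : exmx V) (HA : G_admissible G mut B') (I J : Gorb G) j :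
  j \in val J -> fold_B mut B' I J = if mut j then \sum_(i in val I) B' i j else 0.
Proof.
move=> jJ; rewrite /fold_B (mut_orb HA jJ).
case: (boolP (mut j)) => //= mj.
case: pickP => [j0 j0J|/(_ j)]; last by rewrite jJ.
by apply: (sum_inv_col HA _ j0J jJ); rewrite -(mut_orb HA j0J) (mut_orb HA jJ).
Qed.

Lemma fold_x_any (psi : RF V -> RF (Gorb G)) (y : V -> RF V)
  (Hc : forall i i', orbeq G i i' -> psi (y i) = psi (y i')) (J : Gorb G) j :
  j \in val J -> fold_x psi y J = psi (y j).
Proof.
move=> jJ; rewrite /fold_x; case: pickP => [j0 j0J|/(_ j)]; last by rewrite jJ.
exact: Hc (orb_eq j0J jJ).
Qed.

End Main.

Section Mut.
Variables (m n : nat) (G : {group {perm 'I_m}}).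
Local Notation V := 'I_m.
Local Notation mut := (mutI m n).
Variables (x : V -> RF V) (B : exmx V) (K : Gorb G).
Hypotheses (Hq : quiver_mx mut B) (HA : G_admissible G mut B) (HK : omut mut K).

Lemma mutK k : k \in val K -> mut k.
Proof. by move=> kK; rewrite -(mut_orb HA kK). Qed.

Lemma BKK i k : i \in val K -> k \in val K -> B i k = 0.
Proof. by case: HA => _ _ H3 _ iK kK; apply: H3 (mutK iK) (orb_eq iK kK). Qed.

Definition fm (a b : int) := sgz a * Num.max (a * b) 0.

Definition Cs (s : seq V) : exmx V := fun i j =>
  if ~~ mut j then 0 else if (i \in s) || (j \in s) then - B i j
  else B i j + \sum_(k <- s) fm (B i k) (B k j).

Definition xk (k : V) : RF V :=
  ((\prod_(j | 0 < B j k) x j ^+ `|B j k|%N) +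
   (\prod_(j | B j k < 0) x j ^+ `|B j k|%N)) / x k.

Definition Xs (s : seq V) i := if i \in s then xk i else x i.

Definition mfold (s : seq V) := foldr (fun k s' => seed_mut mut s' k) (x, B) s.

Lemma mfold_eq s : uniq s -> {subset s <= val K} ->
  (forall i j, (mfold s).2 i j = Cs s i j) /\ (forall i, (mfold s).1 i = Xs s i).
Proof.
elim: s => [|k s IH] /=.
  move=> _ _; split => [i j|i] //; rewrite /Cs /=.
  case: (boolP (mut j)) => mj /=; first by rewrite big_nil addr0.
  by rewrite Hq.1.
move=> /andP [ks us] sub.
have kK : k \in val K by apply: sub; rewrite mem_head.
have sK : {subset s <= val K} by move=> y ys; apply: sub; rewrite in_cons ys orbT.
have [IH2 IH1] := IH us sK.
have mk := mutK kK.
have Cik : forall i, Cs s i k = B i k.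
  move=> i; rewrite /Cs mk /= (negbTE ks) orbF; case: ifP => iS.
    by rewrite (BKK (sK _ iS) kK) oppr0.
  rewrite big_seq big1 ?addr0 // => k' k's.
  by rewrite /fm (BKK (sK _ k's) kK) mulr0 maxxx mulr0.
have Ckj : forall j, mut j -> Cs s k j = B k j.
  move=> j mj; rewrite /Cs mj /= (negbTE ks) /=; case: ifP => jS.
    by rewrite (BKK kK (sK _ jS)) oppr0.
  rewrite big_seq big1 ?addr0 // => k' k's.
  by rewrite /fm (BKK kK (sK _ k's)) sgz0 mul0r.
split.
  move=> i j; rewrite /seed_mut /= /mx_mut !IH2.
  case: (boolP (mut j)) => mj /=; last by rewrite /Cs mj.
  case: (eqVneq i k) => [->|ik] /=.
    by rewrite Ckj // /Cs mj mem_head.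
  case: (eqVneq j k) => [->|jk] /=.
    by rewrite Cik /Cs mk mem_head orbT.
  rewrite Cik Ckj // /Cs mj /= !in_cons (negbTE ik) (negbTE jk) /= big_cons.
  case: ifP => ijs.
    case/orP: ijs => [iS|jS].
      by rewrite (BKK (sK _ iS) kK) sgz0 mul0r addr0.
    by rewrite (BKK kK (sK _ jS)) mulr0 maxxx mulr0 addr0.
  by rewrite /fm addrAC -addrA.
move=> i; rewrite /seed_mut /= /x_mut.
case: (eqVneq i k) => [->|ik].
  rewrite /Xs mem_head /xk IH1 /Xs (negbTE ks).
  congr (_ * _); congr (_ + _).
    apply: eq_big => [j|j]; first by rewrite IH2 Cik.
    rewrite IH2 Cik IH1 /Xs => pos; case: ifP => // jS.
    by move: pos; rewrite (BKK (sK _ jS) kK) ltxx.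
  apply: eq_big => [j|j]; first by rewrite IH2 Cik.
  rewrite IH2 Cik IH1 /Xs => pos; case: ifP => // jS.
  by move: pos; rewrite (BKK (sK _ jS) kK) ltxx.
by rewrite IH1 /Xs in_cons (negbTE ik).
Qed.

End Mut.

Lemma rfvar_neq0 (V : finType) (v : V) : rfvar v != 0.
Proof.
rewrite /rfvar tofrac_eq0; apply/eqP => h.
have := mcoeffXU rat (enum_rank v) (enum_rank v).
by rewrite h mcoeff0 eqxx => /esym/eqP; rewrite oner_eq0.
Qed.

Lemma sf1 (V : finType) (v : V) : sf (1 : RF V).
Proof. by rewrite -(divff (rfvar_neq0 v)); apply: sf_div; apply: sf_var. Qed.

Lemma sf_exp (V : finType) (v : V) (a : RF V) k : sf a -> sf (a ^+ k).
Proof.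
move=> sa; elim: k => [|k IH]; first by rewrite expr0; apply: sf1 v.
by rewrite exprS; apply: sf_mul.
Qed.

Lemma sf_prod (V : finType) (v : V) (I : finType) (P : pred I) (F : I -> RF V) :
  (forall i, sf (F i)) -> sf (\prod_(i | P i) F i).
Proof.
move=> H; apply: (big_ind (@sf V)); [exact: sf1 v| exact: sf_mul | move=> i _; exact: H].
Qed.

Section Psi.
Variables (V W : finType) (psi : RF V -> RF W) (Hh : sf_hom psi) (v : V).
Hypothesis psi1 : psi 1 = 1.

Lemma psi_exp a k : sf a -> psi (a ^+ k) = psi a ^+ k.
Proof.
move=> sa; elim: k => [|k IH]; first by rewrite !expr0.
have [_ Hop] := Hh.
by rewrite !exprS; have [_ -> _] := Hop _ _ sa (sf_exp v k sa); rewrite IH.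
Qed.

Lemma psi_prod (I : finType) (P : pred I) (F : I -> RF V) :
  (forall i, sf (F i)) -> psi (\prod_(i | P i) F i) = \prod_(i | P i) psi (F i).
Proof.
move=> H.
suff : sf (\prod_(i | P i) F i) /\ psi (\prod_(i | P i) F i) = \prod_(i | P i) psi (F i)
  by case.
apply: (big_ind2 (fun a b => sf a /\ psi a = b)).
- by split; [apply: sf1 v | ].
- move=> a1 b1 a2 b2 [s1 e1] [s2 e2]; split; first exact: sf_mul.
  by have [_ Hop] := Hh; have [_ -> _] := Hop _ _ s1 s2; rewrite e1 e2.
- by move=> i _; split.
Qed.

End Psi.

Lemma psi_one (V W : finType) (psi : RF V -> RF W) (Hh : sf_hom psi)
  (Hs : sf_surj psi) (v : V) (w : W) : psi 1 = 1.
Proof.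
have [a sa pa] := Hs _ (sf_var w).
have [_ Hop] := Hh; have [_ e _] := Hop _ _ sa (sf1 v).
move: e; rewrite mulr1 pa => /esym e.
by apply: (mulfI (rfvar_neq0 w)); rewrite mulr1.
Qed.

Section Key.
Variables (m n : nat) (G : {group {perm 'I_m}}).
Local Notation V := 'I_m.
Local Notation mut := (mutI m n).
Variables (psi : RF V -> RF (Gorb G)) (x : V -> RF V) (v : V).
Hypotheses (Hh : sf_hom psi) (psi1 : psi 1 = 1) (sfx : forall i, sf (x i))
  (Hc : forall i i', orbeq G i i' -> psi (x i) = psi (x i')).

Lemma prodP (a : V -> int) (Hss : forall i i', orbeq G i i' -> 0 <= a i * a i') :
  psi (\prod_(j | 0 < a j) x j ^+ absz (a j)) =
  \prod_(J : Gorb G | 0 < \sum_(j in val J) a j)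
     fold_x psi x J ^+ absz (\sum_(j in val J) a j).
Proof.
rewrite (psi_prod Hh v psi1); last by move=> i; apply: sf_exp v _ _ (sfx i).
rewrite (eq_bigr (fun j => psi (x j) ^+ absz (a j))); last first.
  by move=> j _; rewrite (psi_exp Hh v psi1).
rewrite (partition_big (fun j => orb_of G j) xpredT) //=.
rewrite [RHS]big_mkcond /=; apply: eq_bigr => J _.
have Hss' : forall i i', i \in val J -> i' \in val J -> 0 <= a i * a i'.
  by move=> i i' iJ i'J; apply: Hss; apply: orb_eq iJ i'J.
have [E1 E2] := ss_P Hss'.
transitivity (\prod_(j in val J | 0 < a j) fold_x psi x J ^+ absz (a j)).
  apply: eq_big => [j|j]; first by rewrite orb_ofE andbC.
  by rewrite orb_ofE => /andP [_ jJ]; rewrite (fold_x_any Hc jJ).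
rewrite prodrXr; case: ifP => pos; first by rewrite E2.
rewrite big_pred0 ?expr0 // => j; apply/negP => /andP [jJ pj].
have : [exists i in val J, 0 < a i] by apply/existsP; exists j; rewrite jJ.
by rewrite -E1 pos.
Qed.

End Key.

Theorem lemma4p4p8 (m n : nat) (G : {group {perm 'I_m}})
  (psi : RF 'I_m -> RF (Gorb G))
  (x : 'I_m -> RF 'I_m) (B : exmx 'I_m) (K : Gorb G) :
  (n <= m)%N ->
  (* G maps the mutable vertices to themselves *)
  (forall g i, g \in G -> mutI m n i -> mutI m n (g i)) ->
  (* psi : F_sf -> F^G_sf is a surjective semifield homomorphism *)
  sf_hom psi -> sf_surj psi ->
  (* Sigma = (x, B~(Q)) is a seed, Q a quiver *)
  free_gen x -> quiver_mx (mutI m n) B ->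
  (* Sigma is (G,psi)-admissible *)
  psi_admissible G (mutI m n) psi (x, B) ->
  (* K is a mutable G-orbit *)
  omut (mutI m n) K ->
  (* mu_K(Q) is G-admissible *)
  G_admissible G (mutI m n) (orbit_mx_mut (mutI m n) K B) ->
  psi_admissible G (mutI m n) psi (orbit_mut (mutI m n) K (x, B)) /\
  fold_seed (mutI m n) psi (orbit_mut (mutI m n) K (x, B)) =
  seed_mut (omut (mutI m n)) (fold_seed (mutI m n) psi (x, B)) K.
Proof.
move=> _ _ Hh Hs _ Hq [HA sfx Hc] HK HA'.
have [k0 k0K] := orb_nonempty K.
have psi1 := psi_one Hh Hs k0 K.
set s0 := enum (val K).
have Hmo : orbit_mut (mutI m n) K (x, B) = mfold n x B s0 by [].
have M2g : forall s, (mfold n x B s).2 =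
    foldr (fun k B' => mx_mut (mutI m n) B' k) B s.
  by elim => //= k s ->.
have M2 : (mfold n x B s0).2 = orbit_mx_mut (mutI m n) K B := M2g s0.
have sub0 : {subset s0 <= val K} by move=> y; rewrite mem_enum.
have [E2 E1] := mfold_eq x Hq HA HK (enum_uniq _) sub0.
have E2' : forall i j, orbit_mx_mut (mutI m n) K B i j = Cs n B s0 i j.
  by move=> i j; rewrite -M2 E2.
have [_ Hop] := Hh.
have [_ _ _ H4] := HA.
have sfP : forall k (P : pred 'I_m), sf (\prod_(j | P j) x j ^+ `|B j k|%N).
  by move=> k P; apply: (sf_prod k0) => j; apply: sf_exp k0 _ _ (sfx j).
have sfxk : forall k, sf (xk x B k).
  by move=> k; apply: sf_div; [apply: sf_add|]; [apply: sfP|apply: sfP|apply: sfx].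
have Xk : forall k, k \in val K ->
    psi (xk x B k) = x_mut (fold_B (mutI m n) B) (fold_x psi x) K K.
  move=> k kK; rewrite /xk /x_mut eqxx.
  have sP1 := sfP k (fun j => 0 < B j k).
  have sP2 := sfP k (fun j => B j k < 0).
  have [_ _ ->] := Hop _ _ (sf_add sP1 sP2) (sfx k).
  have [-> _ _] := Hop _ _ sP1 sP2.
  rewrite (fold_x_any Hc kK).
  have FB : forall J, fold_B (mutI m n) B J K = \sum_(j in val J) B j k.
    by move=> J; rewrite (fold_B_any HA J kK) (mutK HA HK kK).
  have mk := mutK HA HK kK.
  congr (_ / _); congr (_ + _).
    transitivity (\prod_(J : Gorb G | 0 < \sum_(j in val J) B j k)
       fold_x psi x J ^+ absz (\sum_(j in val J) B j k)).
      apply: (prodP k0 Hh psi1 sfx Hc (a := fun j => B j k)).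
      by move=> i i' ii'; apply: H4.
    by apply: eq_big => [J|J _]; rewrite FB.
  transitivity (psi (\prod_(j | 0 < - B j k) x j ^+ absz (- B j k))).
    by congr psi; apply: eq_big => [j|j _]; rewrite ?oppr_gt0 ?abszN.
  transitivity (\prod_(J : Gorb G | 0 < \sum_(j in val J) - B j k)
       fold_x psi x J ^+ absz (\sum_(j in val J) - B j k)).
    apply: (prodP k0 Hh psi1 sfx Hc (a := fun j => - B j k)).
    by move=> i i' ii'; rewrite mulrNN; apply: H4.
  by apply: eq_big => [J|J _]; rewrite FB sumrN ?oppr_gt0 ?abszN.
have HcX : forall i i', orbeq G i i' ->
    psi ((mfold n x B s0).1 i) = psi ((mfold n x B s0).1 i').
  move=> i i' ii'; rewrite !E1 /Xs !mem_enum.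
  case: (boolP (i \in val K)) => iK.
    by rewrite (orb_closed iK ii') !Xk // (orb_closed iK ii').
  have i'nK : i' \notin val K.
    apply/negP => i'K; move/negP: iK; apply.
    have i'O := orb_closed (orb_of_mem G i) ii'.
    by rewrite -(orb_uniq i'O i'K); apply: orb_of_mem.
  by rewrite (negbTE i'nK); apply: Hc.
rewrite Hmo; split.
  split; first by rewrite M2.
    by move=> i; rewrite E1 /Xs; case: ifP => _; [apply: sfxk|apply: sfx].
  exact: HcX.
rewrite /fold_seed /seed_mut /= M2.
f_equal; apply: functional_extensionality => I.
  have [i iI] := orb_nonempty I.
  rewrite (fold_x_any HcX iI) E1 /Xs mem_enum /x_mut.
  case: (eqVneq I K) => [IK|IK].
    by subst I; rewrite iI Xk // /x_mut eqxx.
  have iK : i \notin val K.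
    by apply/negP => iK; move/eqP: IK; apply; apply: orb_uniq iI iK.
  by rewrite (negbTE iK) (fold_x_any Hc iI).
apply: functional_extensionality => J.
have [j jJ] := orb_nonempty J.
rewrite (fold_B_any HA' I jJ) /mx_mut (mut_orb HA jJ).
case: (boolP (mutI m n j)) => mj //=.
rewrite (fold_B_any HA I jJ) (fold_B_any HA I k0K) (fold_B_any HA K jJ).
rewrite mj (mutK HA HK k0K) /=.
have mem0 : forall y, (y \in s0) = (y \in val K) by move=> y; rewrite mem_enum.
rewrite (eq_bigr (fun i => Cs n B s0 i j)); last by move=> i _; rewrite E2'.
case: (eqVneq J K) => [JK|JK].
  subst J; rewrite orbT -sumrN; apply: eq_bigr => i _.
  by rewrite /Cs mj /= !mem0 jJ orbT.
case: (eqVneq I K) => [IK|IK].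
  subst I; rewrite -sumrN; apply: eq_bigr => i iK.
  by rewrite /Cs mj /= mem0 iK.
have jK : j \notin val K.
  by apply/negP => jK; move/eqP: JK; apply; apply: orb_uniq jJ jK.
rewrite /= (eq_bigr (fun i => B i j + \sum_(k in val K) fm (B i k) (B k j))); last first.
  move=> i iI; have iK : i \notin val K.
    by apply/negP => iK; move/eqP: IK; apply; apply: orb_uniq iI iK.
  by rewrite /Cs mj /= !mem0 (negbTE iK) (negbTE jK) /= big_enum.
rewrite big_split /=; congr (_ + _).
rewrite exchange_big /=.
transitivity (\sum_(k in val K)
   (Num.max (\sum_(i in val I) B i k0) 0 * Num.max (B k j) 0 -
    Num.min (\sum_(i in val I) B i k0) 0 * Num.min (B k j) 0)).
  apply: eq_bigr => k kK.
  rewrite -(sum_inv_col HA I kK k0K (mutK HA HK kK)).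
  have Hss : forall i i', i \in val I -> i' \in val I -> 0 <= B i k * B i' k.
    by move=> i i' iI i'I; apply: H4 (orb_eq iI i'I) (mutK HA HK kK).
  have [Mx Mn] := ss_maxmin Hss.
  rewrite -Mx -Mn !mulr_suml -sumrB; apply: eq_bigr => i _.
  by rewrite /fm f_split.
have Hss : forall k k', k \in val K -> k' \in val K -> 0 <= B k j * B k' j.
  by move=> k k' kK k'K; apply: H4 (orb_eq kK k'K) mj.
have [Mx Mn] := ss_maxmin Hss.
by rewrite sumrB -!mulr_sumr Mx Mn f_split.
Qed.
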